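(* Let $\mathcal{M}$ be a saturated model of Presburger arithmetic, $\mathcal{M}_0\preceq\mathcal{M}$ a small elementary submodel, and $C\subseteq\mathcal{M}^2$ a $(1,1)$-cell definable over $\mathcal{M}_0$. Let $(a,b)\in C$ with $\dim((a,b)/\mathcal{M}_0)=2$. Then there is a definable box $B$ around $(a,b)$ with $B\subseteq C$.
   Context: Presburger arithmetic is $\mathrm{Th}(\mathbb{Z},+,-,<,0,1,\{\equiv_n\}_n)$. A $B$-linear function is $f(x)=\sum_i s_i\frac{x_i-c_i}{k_i}+\gamma$ with $s_i,k_i,c_i$ integers, $0\le c_i<k_i$, $x_i\equiv_{k_i}c_i$, and $\gamma\in\mathrm{dcl}(B)$. A $B$-definable $1$-cell is an infinite set $\{x: \alpha\ \square_1\ x\ \square_2\ \beta,\ x\equiv_N c\}$ with $\alpha,\beta\in\mathrm{dcl}(B)$, $0\le c<N$ integers and each $\square_j$ either $\le$ or no condition. A $(1,1)$-cell is a set $\{(x,t): x\in D,\ \alpha(x)\ \square_1\ t\ \square_2\ \beta(x),\ t\equiv_N k\}$ with $D$ a $1$-cell, $\alpha,\beta$ $B$-linear functions on $D$, $0\le k<N$ integers, such that the fiber sizes are not uniformly bounded by a natural number. The dimension of a tuple over $\mathcal{M}_0$ is the size of a maximal dcl-independent subset of its coordinates over $\mathcal{M}_0$. A box around a point $p\in\mathcal{M}^n$ is a product $B_1\times\dots\times B_n$ of sets $B_i=\{x:\alpha_i\ \square_1\ x\ \square_2\ \beta_i,\ x\equiv_{N_i}c_i\}$ with $p_i\in B_i$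 and both $[\alpha_i,p_i]$ and $[p_i,\beta_i]$ infinite. *)

(* Defs.v *)
From Stdlib Require Import ZArith List.
Import ListNotations.

Set Implicit Arguments.

Record PStruct := {
  car :> Type;
  padd : car -> car -> car;
  popp : car -> car;
  pzero : car;
  pone : car;
  plt : car -> car -> Prop;
  pcong : nat -> car -> car -> Prop }.

Inductive term (T : Type) : Type :=
| TVar : nat -> term T
| TPar : T -> term T
| TZero : term T
| TOne : term T
| TAdd : term T -> term T -> term T
| TOpp : term T -> term T.

Inductive form (T : Type) : Type :=
| FEq : term T -> term T -> form T
| FLt : term T -> term T -> form T
| FCong : nat -> term T -> term T -> form T
| FFalse : form T
| FNot : form T -> form T
| FAnd : form T -> form T -> form T
| FOr : form T -> form T -> form T
| FImp : form T -> form T -> form T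
| FEx : nat -> form T -> form T
| FAll : nat -> form T -> form T.

Arguments TZero {T}. Arguments TOne {T}. Arguments FFalse {T}.

Section Sem.
Variables (M : PStruct) (T : Type) (ip : T -> car M).

Fixpoint teval (e : nat -> car M) (t : term T) : car M :=
  match t with
  | TVar _ n => e n
  | TPar p => ip p
  | TZero => pzero M
  | TOne => pone M
  | TAdd u v => padd M (teval e u) (teval e v)
  | TOpp u => popp M (teval e u)
  end.

Definition upd (e : nat -> car M) (i : nat) (x : car M) : nat -> car M :=
  fun j => if Nat.eqb j i then x else e j.

Fixpoint sat (e : nat -> car M) (f : form T) : Prop :=
  match f with
  | FEq u v => teval e u = teval e v
  | FLt u v => plt M (teval e u) (teval e v)
  | FCong n u v => pcong M n (teval e u) (teval e v)
  | FFalse => False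
  | FNot g => ~ sat e g
  | FAnd g h => sat e g /\ sat e h
  | FOr g h => sat e g \/ sat e h
  | FImp g h => sat e g -> sat e h
  | FEx i g => exists x, sat (upd e i x) g
  | FAll i g => forall x, sat (upd e i x) g
  end.
End Sem.
Arguments sat M {T} ip e f.
Arguments teval M {T} ip e t.

Fixpoint tparams_in (T : Type) (A : T -> Prop) (t : term T) : Prop :=
  match t with
  | TVar _ _ | TZero | TOne => True
  | TPar p => A p
  | TAdd u v => tparams_in A u /\ tparams_in A v
  | TOpp u => tparams_in A u
  end.

Fixpoint fparams_in (T : Type) (A : T -> Prop) (f : form T) : Prop :=
  match f with
  | FEq u v | FLt u v | FCong _ u v => tparams_in A u /\ tparams_in A v
  | FFalse => True
  | FNot g => fparams_in A g
  | FAnd g h | FOr g h | FImp g h => fparams_in A g /\ fparams_in A h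
  | FEx _ g | FAll _ g => fparams_in A g
  end.

Definition noparam (M : PStruct) : Empty_set -> car M :=
  fun x => match x with end.

Definition Zstruct : PStruct := {|
  car := Z; padd := Z.add; popp := Z.opp; pzero := 0%Z; pone := 1%Z;
  plt := Z.lt;
  pcong := fun n x y => exists q : Z, (x - y = Z.of_nat n * q)%Z |}.

Definition presburger_model (M : PStruct) : Prop :=
  forall phi : form Empty_set,
    (forall e, sat Zstruct (noparam Zstruct) e phi) ->
    (forall e, sat M (noparam M) e phi).

Definition elem_emb (M0 M : PStruct) (f : car M0 -> car M) : Prop :=
  forall (phi : form Empty_set) (e : nat -> car M0),
    sat M0 (noparam M0) e phi <-> sat M (noparam M) (fun n => f (e n)) phi.

Definition img (M0 M : PStruct) (f : car M0 -> car M) : car M -> Prop :=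
  fun x => exists y, f y = x.

Arguments img {M0 M}.

(** Formulas in one variable with parameters in M, evaluated at x
    (every variable is interpreted as x). *)
Definition sat1 (M : PStruct) (phi : form (car M)) (x : car M) : Prop :=
  sat M (fun p => p) (fun _ => x) phi.

Arguments sat1 {M}.

Definition smaller (M : PStruct) (X : Type) : Prop :=
  ~ exists g : car M -> X, forall x y, g x = g y -> x = y.

Definition saturated (M : PStruct) : Prop :=
  forall (A : car M -> Prop), smaller M {x : car M | A x} ->
  forall (p : form (car M) -> Prop),
    (forall phi, p phi -> fparams_in A phi) ->
    (forall l : list (form (car M)), (forall phi, In phi l -> p phi) ->
       exists x, forall phi, In phi l -> sat1 phi x) ->
    exists x, forall phi, p phi -> sat1 phi x.

Definition dcl (M : PStruct) (A : car M -> Prop) (x : car M) : Prop :=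
  exists phi : form (car M), fparams_in A phi /\
    forall y, sat1 phi y <-> y = x.

Arguments dcl {M}.

Fixpoint nmul (M : PStruct) (n : nat) (x : car M) : car M :=
  match n with
  | O => pzero M
  | S m => padd M x (nmul M m x)
  end.

Arguments nmul {M}.

Definition zmul (M : PStruct) (s : Z) (x : car M) : car M :=
  match s with
  | Z0 => pzero M
  | Zpos p => nmul (Pos.to_nat p) x
  | Zneg p => popp M (nmul (Pos.to_nat p) x)
  end.

Arguments zmul {M}.

Definition nat_el (M : PStruct) (n : nat) : car M := nmul n (pone M).
Definition psub (M : PStruct) (x y : car M) : car M := padd M x (popp M y).
Definition ple (M : PStruct) (x y : car M) : Prop := plt M x y \/ x = y.

(** (Externally) infinite subset. *)
Definition infinite (M : PStruct) (S : car M -> Prop) : Prop :=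
  ~ exists l : list (car M), forall x, S x -> In x l.

Arguments infinite {M}.

Definition lbok (M : PStruct) (o : option (car M)) (x : car M) : Prop :=
  match o with Some a => ple M a x | None => True end.
Definition ubok (M : PStruct) (o : option (car M)) (x : car M) : Prop :=
  match o with Some b => ple M x b | None => True end.

Arguments lbok {M}.
Arguments ubok {M}.

Definition one_cell (M : PStruct) (A : car M -> Prop) (D : car M -> Prop) : Prop :=
  exists (lo hi : option (car M)) (N c : nat),
    (forall a, lo = Some a -> dcl A a) /\
    (forall b, hi = Some b -> dcl A b) /\
    (0 < N)%nat /\ (c < N)%nat /\
    (forall x, D x <-> lbok lo x /\ ubok hi x /\ pcong M N x (nat_el M c)) /\
    infinite D.

Arguments one_cell {M}.

Definition lin_fun (M : PStruct) (A : car M -> Prop) (D : car M -> Prop)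
    (al : car M -> car M) : Prop :=
  exists (s : Z) (k c : nat) (gamma : car M),
    (0 < k)%nat /\ (c < k)%nat /\ dcl A gamma /\
    forall x, D x ->
      pcong M k x (nat_el M c) /\
      nmul k (psub M (al x) gamma) = zmul s (psub M x (nat_el M c)).

Arguments lin_fun {M}.

Definition lbfok (M : PStruct) (o : option (car M -> car M)) (x t : car M) : Prop :=
  match o with Some f => ple M (f x) t | None => True end.
Definition ubfok (M : PStruct) (o : option (car M -> car M)) (x t : car M) : Prop :=
  match o with Some f => ple M t (f x) | None => True end.

Arguments lbfok {M}.
Arguments ubfok {M}.

Definition cell11 (M : PStruct) (A : car M -> Prop)
    (C : car M -> car M -> Prop) : Prop :=
  exists (D : car M -> Prop) (lo hi : option (car M -> car M)) (N k : nat),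
    one_cell A D /\
    (forall f, lo = Some f -> lin_fun A D f) /\
    (forall f, hi = Some f -> lin_fun A D f) /\
    (0 < N)%nat /\ (k < N)%nat /\
    (forall x t, C x t <->
       D x /\ lbfok lo x t /\ ubfok hi x t /\ pcong M N t (nat_el M k)) /\
    ~ (exists n : nat, forall x, D x ->
         exists l : list (car M), (length l <= n)%nat /\
           forall t, C x t -> In t l).

Arguments cell11 {M}.

Definition dim2 (M : PStruct) (A : car M -> Prop) (a b : car M) : Prop :=
  ~ dcl (fun x => A x \/ x = b) a /\ ~ dcl (fun x => A x \/ x = a) b.

Arguments dim2 {M}.

Definition box_factor (M : PStruct) (B : car M -> Prop) (p : car M) : Prop :=
  exists (lo hi : option (car M)) (N c : nat),
    (0 < N)%nat /\ (c < N)%nat /\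
    (forall x, B x <-> lbok lo x /\ ubok hi x /\ pcong M N x (nat_el M c)) /\
    B p /\
    (forall al, lo = Some al -> infinite (fun x => ple M al x /\ ple M x p)) /\
    (forall be, hi = Some be -> infinite (fun x => ple M p x /\ ple M x be)).
Arguments box_factor {M}.

(* Main.v *)
Require Import Defs.
From Stdlib Require Import ZArith List Lia Classical FinFun.
Import ListNotations.

Fixpoint tnmul {T} (n : nat) (t : term T) : term T :=
  match n with O => TZero | S m => TAdd t (tnmul m t) end.
Definition tzmul {T} (s : Z) (t : term T) : term T :=
  match s with Z0 => TZero | Zpos p => tnmul (Pos.to_nat p) t
  | Zneg p => TOpp (tnmul (Pos.to_nat p) t) end.

Lemma teval_tnmul M T ip e n (t : term T) :
  teval M ip e (tnmul n t) = nmul n (teval M ip e t).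
Proof. induction n; simpl; congruence. Qed.
Lemma teval_tzmul M T ip e s (t : term T) :
  teval M ip e (tzmul s t) = zmul s (teval M ip e t).
Proof. destruct s; simpl; rewrite ?teval_tnmul; reflexivity. Qed.
Lemma nmulZ n (x : Z) : @nmul Zstruct n x = (Z.of_nat n * x)%Z.
Proof. induction n; cbn [nmul]. reflexivity. rewrite IHn. cbn [padd Zstruct]. lia. Qed.
Lemma zmulZ s (x : Z) : @zmul Zstruct s x = (s * x)%Z.
Proof. destruct s; cbn [zmul]; rewrite ?nmulZ; cbn [popp pzero Zstruct]; lia. Qed.

Definition V n : term Empty_set := TVar _ n.
Definition tnat {T} n : term T := tnmul n TOne.
Definition tsub {T} (u v : term T) := TAdd u (TOpp v).
Definition fle {T} (u v : term T) := FOr (FLt u v) (FEq u v).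
Definition env {M : PStruct} (l : list (car M)) : nat -> car M := fun n => nth n l (pzero M).

Ltac zside := intro e; unfold fle, tsub, tnat, V;
  cbn [sat teval upd Nat.eqb];
  repeat progress (rewrite ?teval_tnmul, ?teval_tzmul; cbn [teval Zstruct padd popp pzero pone plt pcong]);
  rewrite ?nmulZ, ?zmulZ.


Ltac mside H := unfold fle, tsub, tnat, V, env in H; simpl in H;
  repeat progress (rewrite ?teval_tnmul, ?teval_tzmul in H; simpl in H); exact H.



Lemma T15 M (HM : presburger_model M) : forall y a w, padd M y w = padd M a w -> y = a.
Proof.
  intros y a w.
  pose proof (HM (FImp (FEq (TAdd (V 0) (V 2)) (TAdd (V 1) (V 2))) (FEq (V 0) (V 1)))) as H.
  specialize (H ltac:(zside; lia) (env [y;a;w])). mside H.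
Qed.

Lemma T1 M (HM : presburger_model M) n : forall u v, ple M (padd M u (nat_el M n)) v ->
   ~ ple M (padd M u (nat_el M (S n))) v -> v = padd M u (nat_el M n).
Proof.
  intros u v.
  pose proof (HM (FImp (fle (TAdd (V 0) (tnat n)) (V 1)) (FImp (FNot (fle (TAdd (V 0) (tnat (S n))) (V 1))) (FEq (V 1) (TAdd (V 0) (tnat n)))))) as H.
  specialize (H ltac:(zside; lia) (env [u;v])). mside H.
Qed.

Lemma T0 M (HM : presburger_model M) : forall u v, ple M u v -> ple M (padd M u (nat_el M 0)) v.
Proof.
  intros u v.
  pose proof (HM (FImp (fle (V 0) (V 1)) (fle (TAdd (V 0) (tnat 0)) (V 1)))) as H.
  specialize (H ltac:(zside; lia) (env [u;v])). mside H.
Qed.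

Lemma T3 M (HM : presburger_model M) i : forall u, ple M u (padd M u (nat_el M i)).
Proof.
  intros u.
  pose proof (HM (fle (V 0) (TAdd (V 0) (tnat i)))) as H.
  specialize (H ltac:(zside; lia) (env [u])). mside H.
Qed.

Lemma T2 M (HM : presburger_model M) n : forall a r, ple M (padd M (pzero M) (nat_el M n)) r ->
  ple M (padd M (psub M a r) (nat_el M n)) a.
Proof.
  intros a r.
  pose proof (HM (FImp (fle (TAdd TZero (tnat n)) (V 1)) (fle (TAdd (tsub (V 0) (V 1)) (tnat n)) (V 0)))) as H.
  specialize (H ltac:(zside; lia) (env [a;r])). mside H.
Qed.

Lemma T4 M (HM : presburger_model M) n : forall a r, ple M (padd M (pzero M) (nat_el M n)) r ->
  ple M (padd M a (nat_el M n)) (padd M a r).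
Proof.
  intros a r.
  pose proof (HM (FImp (fle (TAdd TZero (tnat n)) (V 1)) (fle (TAdd (V 0) (tnat n)) (TAdd (V 0) (V 1))))) as H.
  specialize (H ltac:(zside; lia) (env [a;r])). mside H.
Qed.

Lemma T5 M (HM : presburger_model M) i j : i <> j -> forall u, padd M u (nat_el M i) <> padd M u (nat_el M j).
Proof.
  intros Hij u.
  pose proof (HM (FNot (FEq (TAdd (V 0) (tnat i)) (TAdd (V 0) (tnat j))))) as H.
  specialize (H ltac:(zside; lia) (env [u])). mside H.
Qed.

Lemma T6 M (HM : presburger_model M) : forall x y, ple M x y \/ ple M y x.
Proof.
  intros x y.
  pose proof (HM (FOr (fle (V 0) (V 1)) (fle (V 1) (V 0)))) as H.
  specialize (H ltac:(zside; lia) (env [x;y])). mside H.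
Qed.

Lemma Ttrans M (HM : presburger_model M) : forall x y z, ple M x y -> ple M y z -> ple M x z.
Proof.
  intros x y z.
  pose proof (HM (FImp (fle (V 0) (V 1)) (FImp (fle (V 1) (V 2)) (fle (V 0) (V 2))))) as H.
  specialize (H ltac:(zside; lia) (env [x;y;z])). mside H.
Qed.

Lemma T7 M (HM : presburger_model M) m : (0 < m)%nat -> forall u v,
  ple M (padd M u (nat_el M 0)) v -> exists q, ple M (padd M u (nmul m q)) v /\
     plt M v (padd M (padd M u (nmul m q)) (nat_el M m)).
Proof.
  intros Hm u v.
  pose proof (HM (FImp (fle (TAdd (V 0) (tnat 0)) (V 1)) (FEx 2 (FAnd (fle (TAdd (V 0) (tnmul m (V 2))) (V 1))
      (FLt (V 1) (TAdd (TAdd (V 0) (tnmul m (V 2))) (tnat m))))))) as H.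
  specialize (H ltac:(zside; intros Hle; exists ((e 1%nat - e 0%nat) / Z.of_nat m)%Z;
     cbn [Nat.eqb]; rewrite ?teval_tnmul, ?nmulZ; cbn [teval upd Nat.eqb Zstruct padd popp pzero pone plt pcong];
     rewrite ?nmulZ;
     pose proof (Z.div_mod (e 1%nat - e 0%nat) (Z.of_nat m) ltac:(lia));
     pose proof (Z.mod_pos_bound (e 1%nat - e 0%nat) (Z.of_nat m) ltac:(lia)); lia) (env [u;v])).
  unfold fle, tsub, tnat, V, env in H; simpl in H.
  intro Hle. destruct (H Hle) as [q Hq]. exists q. simpl in Hq.
  rewrite ?teval_tnmul in Hq. simpl in Hq. exact Hq.
Qed.

Lemma T8 M (HM : presburger_model M) m n : (0 < m)%nat -> forall u v q,
  plt M v (padd M (padd M u (nmul m q)) (nat_el M m)) ->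
  ple M (padd M u (nat_el M (m * n))) v -> ple M (padd M (pzero M) (nat_el M n)) q.
Proof.
  intros Hm u v q.
  pose proof (HM (FImp (FLt (V 1) (TAdd (TAdd (V 0) (tnmul m (V 2))) (tnat m)))
    (FImp (fle (TAdd (V 0) (tnat (m * n))) (V 1)) (fle (TAdd TZero (tnat n)) (V 2))))) as H.
  specialize (H ltac:(zside; rewrite Nat2Z.inj_mul; nia) (env [u;v;q])). mside H.
Qed.

Lemma T9 M (HM : presburger_model M) m : forall u v q r,
  ple M (padd M u (nmul m q)) v -> ple M r q -> ple M (padd M u (nmul m r)) v.
Proof.
  intros u v q r.
  pose proof (HM (FImp (fle (TAdd (V 0) (tnmul m (V 2))) (V 1))
    (FImp (fle (V 3) (V 2)) (fle (TAdd (V 0) (tnmul m (V 3))) (V 1))))) as H.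
  specialize (H ltac:(zside; nia) (env [u;v;q;r])). mside H.
Qed.

Lemma T10 M (HM : presburger_model M) n : forall a,
  ple M (padd M a (nat_el M n)) (pzero M) -> ple M (padd M (pzero M) (nat_el M n)) (popp M a).
Proof.
  intros a.
  pose proof (HM (FImp (fle (TAdd (V 0) (tnat n)) TZero) (fle (TAdd TZero (tnat n)) (TOpp (V 0))))) as H.
  specialize (H ltac:(zside; lia) (env [a])). mside H.
Qed.

Lemma T11 M (HM : presburger_model M) : forall al a r x,
  ple M (padd M al (nmul 1 r)) a -> ple M (psub M a r) x -> ple M al x.
Proof.
  intros al a r x.
  pose proof (HM (FImp (fle (TAdd (V 0) (tnmul 1 (V 2))) (V 1)) (FImp (fle (tsub (V 1) (V 2)) (V 3)) (fle (V 0) (V 3))))) as H.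
  specialize (H ltac:(zside; lia) (env [al;a;r;x])). mside H.
Qed.

Lemma T12 M (HM : presburger_model M) : forall be a r x,
  ple M (padd M a (nmul 1 r)) be -> ple M x (padd M a r) -> ple M x be.
Proof.
  intros be a r x.
  pose proof (HM (FImp (fle (TAdd (V 1) (tnmul 1 (V 2))) (V 0)) (FImp (fle (V 3) (TAdd (V 1) (V 2))) (fle (V 3) (V 0))))) as H.
  specialize (H ltac:(zside; lia) (env [be;a;r;x])). mside H.
Qed.

Lemma T14 M (HM : presburger_model M) k : (0 < k)%nat -> forall y l g,
  nmul k (psub M y g) = nmul k (psub M l g) -> y = l.
Proof.
  intros Hk y l g.
  pose proof (HM (FImp (FEq (tnmul k (tsub (V 0) (V 2))) (tnmul k (tsub (V 1) (V 2)))) (FEq (V 0) (V 1)))) as H.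
  specialize (H ltac:(zside; nia) (env [y;l;g])). mside H.
Qed.

Lemma zfact1 (s K C u l g x a r t b : Z) : (0 < K)%Z ->
  (K * (u - g) = s * (x - C))%Z -> (K * (l - g) = s * (a - C))%Z ->
  (a - r <= x)%Z -> (x <= a + r)%Z -> (b - r <= t)%Z -> (l + (Z.abs s + K) * r <= b)%Z -> (0 <= r)%Z ->
  (u <= t)%Z.
Proof.
  intros HK H1 H2 H3 H4 H5 H6 H7.
  assert (E1 : (K*(u-l) = K*(u-g) - K*(l-g))%Z) by ring.
  assert (E2 : (s*(x-a) = s*(x-C) - s*(a-C))%Z) by ring.
  assert (E : (K * (u - l) = s * (x - a))%Z) by lia.
  assert (B : (s * (x - a) <= Z.abs s * r)%Z).
  { destruct (Z.abs_spec s) as [[Hs ->]|[Hs ->]].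
    - pose proof (Z.mul_nonneg_nonneg s (r - (x - a)) Hs ltac:(lia)). nia.
    - pose proof (Z.mul_nonneg_nonneg (-s) (x - a + r) ltac:(lia) ltac:(lia)). nia. }
  pose proof (Z.mul_nonneg_nonneg (K - 1) r ltac:(lia) H7).
  pose proof (Z.mul_nonneg_nonneg (K - 1) (b - l - (Z.abs s + K) * r) ltac:(lia) ltac:(lia)).
  pose proof (Z.abs_nonneg s).
  pose proof (Z.mul_nonneg_nonneg (Z.abs s) r ltac:(lia) H7).
  assert (K * (t - u) >= 0)%Z by nia. nia.
Qed.

Lemma zfact2 (s K C u l g x a r t b : Z) : (0 < K)%Z ->
  (K * (u - g) = s * (x - C))%Z -> (K * (l - g) = s * (a - C))%Z ->
  (a - r <= x)%Z -> (x <= a + r)%Z -> (t <= b + r)%Z -> (b + (Z.abs s + K) * r <= l)%Z -> (0 <= r)%Z ->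
  (t <= u)%Z.
Proof.
  intros HK H1 H2 H3 H4 H5 H6 H7.
  assert (E1 : (K*(u-l) = K*(u-g) - K*(l-g))%Z) by ring.
  assert (E2 : (s*(x-a) = s*(x-C) - s*(a-C))%Z) by ring.
  assert (E : (K * (u - l) = s * (x - a))%Z) by lia.
  assert (B : (- (Z.abs s * r) <= s * (x - a))%Z).
  { destruct (Z.abs_spec s) as [[Hs ->]|[Hs ->]].
    - pose proof (Z.mul_nonneg_nonneg s (x - a + r) Hs ltac:(lia)). nia.
    - pose proof (Z.mul_nonneg_nonneg (-s) (r - (x - a)) ltac:(lia) ltac:(lia)). nia. }
  pose proof (Z.mul_nonneg_nonneg (K - 1) r ltac:(lia) H7).
  pose proof (Z.mul_nonneg_nonneg (K - 1) (l - b - (Z.abs s + K) * r) ltac:(lia) ltac:(lia)).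
  pose proof (Z.abs_nonneg s).
  pose proof (Z.mul_nonneg_nonneg (Z.abs s) r ltac:(lia) H7).
  assert (K * (u - t) >= 0)%Z by nia. nia.
Qed.

Lemma T13 M (HM : presburger_model M) s k c : (0 < k)%nat -> forall u l g x a r t b,
  nmul k (psub M u g) = zmul s (psub M x (nat_el M c)) ->
  nmul k (psub M l g) = zmul s (psub M a (nat_el M c)) ->
  ple M (psub M a r) x -> ple M x (padd M a r) -> ple M (psub M b r) t ->
  ple M (padd M l (nmul (Z.abs_nat s + k) r)) b -> ple M (padd M (pzero M) (nat_el M 0)) r ->
  ple M u t.
Proof.
  intros Hk u l g x a r t b.
  pose proof (HM (FImp (FEq (tnmul k (tsub (V 0) (V 2))) (tzmul s (tsub (V 3) (tnat c))))
   (FImp (FEq (tnmul k (tsub (V 1) (V 2))) (tzmul s (tsub (V 4) (tnat c))))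
   (FImp (fle (tsub (V 4) (V 5)) (V 3)) (FImp (fle (V 3) (TAdd (V 4) (V 5)))
   (FImp (fle (tsub (V 7) (V 5)) (V 6)) (FImp (fle (TAdd (V 1) (tnmul (Z.abs_nat s + k) (V 5))) (V 7))
   (FImp (fle (TAdd TZero (tnat 0)) (V 5)) (fle (V 0) (V 6)))))))))) as H.
  specialize (H ltac:(zside; rewrite ?Nat2Z.inj_add, ?Zabs2Nat.id_abs; intros;
    assert (Z.le (e 0%nat) (e 6%nat)) by (apply (zfact1 s (Z.of_nat k) (Z.of_nat c * 1) (e 0%nat) (e 1%nat) (e 2%nat) (e 3%nat) (e 4%nat) (e 5%nat) (e 6%nat) (e 7%nat)); lia); lia) (env [u;l;g;x;a;r;t;b])).
  mside H.
Qed.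

Lemma T13' M (HM : presburger_model M) s k c : (0 < k)%nat -> forall u l g x a r t b,
  nmul k (psub M u g) = zmul s (psub M x (nat_el M c)) ->
  nmul k (psub M l g) = zmul s (psub M a (nat_el M c)) ->
  ple M (psub M a r) x -> ple M x (padd M a r) -> ple M t (padd M b r) ->
  ple M (padd M b (nmul (Z.abs_nat s + k) r)) l -> ple M (padd M (pzero M) (nat_el M 0)) r ->
  ple M t u.
Proof.
  intros Hk u l g x a r t b.
  pose proof (HM (FImp (FEq (tnmul k (tsub (V 0) (V 2))) (tzmul s (tsub (V 3) (tnat c))))
   (FImp (FEq (tnmul k (tsub (V 1) (V 2))) (tzmul s (tsub (V 4) (tnat c))))
   (FImp (fle (tsub (V 4) (V 5)) (V 3)) (FImp (fle (V 3) (TAdd (V 4) (V 5)))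
   (FImp (fle (V 6) (TAdd (V 7) (V 5))) (FImp (fle (TAdd (V 7) (tnmul (Z.abs_nat s + k) (V 5))) (V 1))
   (FImp (fle (TAdd TZero (tnat 0)) (V 5)) (fle (V 6) (V 0)))))))))) as H.
  specialize (H ltac:(zside; rewrite ?Nat2Z.inj_add, ?Zabs2Nat.id_abs; intros;
    assert (Z.le (e 6%nat) (e 0%nat)) by (apply (zfact2 s (Z.of_nat k) (Z.of_nat c * 1) (e 0%nat) (e 1%nat) (e 2%nat) (e 3%nat) (e 4%nat) (e 5%nat) (e 6%nat) (e 7%nat)); lia); lia) (env [u;l;g;x;a;r;t;b])).
  mside H.
Qed.

Definition far (M : PStruct) (u v : car M) := forall n, ple M (padd M u (nat_el M n)) v.
Definition far0 (M : PStruct) r := far M (pzero M) r.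

Lemma notfar M (HM : presburger_model M) u v : ple M u v -> ~ far M u v ->
  exists n, v = padd M u (nat_el M n).
Proof.
  intros Huv Hf.
  set (P := fun n => ple M (padd M u (nat_el M n)) v).
  assert (H : exists m, P m /\ ~ P (S m)).
  { apply NNPP; intro Hn. apply Hf. intro n. induction n.
    - apply T0; auto.
    - apply NNPP; intro HS. apply Hn. exists n. split; auto. }
  destruct H as [m [H1 H2]]. exists m. apply (T1 M HM); auto.
Qed.

Lemma refine M (HM : presburger_model M) m u v r : (0 < m)%nat -> far M u v -> far0 M r ->
  exists r', far0 M r' /\ ple M r' r /\ ple M (padd M u (nmul m r')) v.
Proof.
  intros Hm Hf Hr.
  destruct (T7 M HM m Hm u v (Hf 0)) as [q [Hq1 Hq2]].
  assert (Hq : far0 M q).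
  { intro n. apply (T8 M HM m n Hm u v q Hq2 (Hf (m * n)%nat)). }
  destruct (T6 M HM q r) as [H|H].
  - exists q. auto.
  - exists r. split; auto. split. right; reflexivity. eapply T9; eauto.
Qed.

Lemma infinite_seq M (P : car M -> Prop) (g : nat -> car M) :
  (forall i, P (g i)) -> (forall i j, i <> j -> g i <> g j) -> infinite P.
Proof.
  intros HS Hg [l Hl].
  assert (Hinj : FinFun.Injective g).
  { intros i j E. destruct (Nat.eq_dec i j); auto. exfalso; eapply Hg; eauto. }
  pose proof (NoDup_incl_length (l := map g (seq 0 (S (length l)))) (l' := l)
    (FinFun.Injective_map_NoDup Hinj (seq_NoDup _ 0))) as H.
  assert (incl (map g (seq 0 (S (length l)))) l).
  { intros x Hx. apply in_map_iff in Hx. destruct Hx as [i [<- _]]. apply Hl, HS. }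
  specialize (H H0). rewrite length_map, length_seq in H. lia.
Qed.

Lemma left_inf M (HM : presburger_model M) a r : far0 M r ->
  infinite (fun x => ple M (psub M a r) x /\ ple M x a).
Proof.
  intro Hr. apply (@infinite_seq M _ (fun i : nat => padd M (psub M a r) (nat_el M i))).
  - intro i. split. apply T3; auto. apply T2; auto.
  - intros i j Hij. apply T5; auto.
Qed.

Lemma right_inf M (HM : presburger_model M) a r : far0 M r ->
  infinite (fun x => ple M a x /\ ple M x (padd M a r)).
Proof.
  intro Hr. apply (@infinite_seq M _ (fun i : nat => padd M a (nat_el M i))).
  - intro i. split. apply T3; auto. apply T4; auto.
  - intros i j Hij. apply T5; auto.
Qed.

Definition inb (n : nat) (bs : list nat) := existsb (Nat.eqb n) bs.

Fixpoint tr_t {T} (bs : list nat) (t : term T) : term T :=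
  match t with
  | TVar _ n => if inb n bs then TVar _ (S n) else TVar _ 0
  | TPar p => TPar p
  | TZero => TZero
  | TOne => TOne
  | TAdd u v => TAdd (tr_t bs u) (tr_t bs v)
  | TOpp u => TOpp (tr_t bs u)
  end.

Fixpoint tr {T} (bs : list nat) (f : form T) : form T :=
  match f with
  | FEq u v => FEq (tr_t bs u) (tr_t bs v)
  | FLt u v => FLt (tr_t bs u) (tr_t bs v)
  | FCong n u v => FCong n (tr_t bs u) (tr_t bs v)
  | FFalse => FFalse
  | FNot g => FNot (tr bs g)
  | FAnd g h => FAnd (tr bs g) (tr bs h)
  | FOr g h => FOr (tr bs g) (tr bs h)
  | FImp g h => FImp (tr bs g) (tr bs h)
  | FEx i g => FEx (S i) (tr (i :: bs) g)
  | FAll i g => FAll (S i) (tr (i :: bs) g)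
  end.

Lemma tr_t_ok M T (ip : T -> car M) bs t (e e' : nat -> car M) :
  (forall n, inb n bs = true -> e' (S n) = e n) ->
  (forall n, inb n bs = false -> e n = e' 0) ->
  teval M ip e' (tr_t bs t) = teval M ip e t.
Proof.
  intros H1 H2. induction t; simpl; try congruence.
  destruct (inb n bs) eqn:E. apply H1; auto. symmetry; apply H2; auto.
Qed.

Lemma tr_ok M T (ip : T -> car M) phi : forall bs (e e' : nat -> car M),
  (forall n, inb n bs = true -> e' (S n) = e n) ->
  (forall n, inb n bs = false -> e n = e' 0) ->
  (sat M ip e' (tr bs phi) <-> sat M ip e phi).
Proof.
  induction phi; intros bs e e' H1 H2; simpl;
    rewrite ?(tr_t_ok M T ip bs _ e e' H1 H2); try tauto.
  - rewrite (IHphi bs e e' H1 H2). tauto.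
  - rewrite (IHphi1 bs e e' H1 H2), (IHphi2 bs e e' H1 H2). tauto.
  - rewrite (IHphi1 bs e e' H1 H2), (IHphi2 bs e e' H1 H2). tauto.
  - rewrite (IHphi1 bs e e' H1 H2), (IHphi2 bs e e' H1 H2). tauto.
  - assert (K : forall x, sat M ip (upd M e' (S n) x) (tr (n :: bs) phi) <-> sat M ip (upd M e n x) phi).
    { intro x. apply IHphi.
      - intros m Hm. unfold upd. simpl in Hm. destruct (Nat.eqb m n) eqn:E; simpl in *.
        + rewrite E. reflexivity.
        + rewrite E. apply H1; auto.
      - intros m Hm. unfold upd. simpl in Hm. destruct (Nat.eqb m n) eqn:E; simpl in *.
        + discriminate.
        + apply H2; auto. }
    split; intros [x Hx]; exists x; apply K; auto.
  - assert (K : forall x, sat M ip (upd M e' (S n) x) (tr (n :: bs) phi) <-> sat M ip (upd M e n x) phi).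
    { intro x. apply IHphi.
      - intros m Hm. unfold upd. simpl in Hm. destruct (Nat.eqb m n) eqn:E; simpl in *.
        + rewrite E. reflexivity.
        + rewrite E. apply H1; auto.
      - intros m Hm. unfold upd. simpl in Hm. destruct (Nat.eqb m n) eqn:E; simpl in *.
        + discriminate.
        + apply H2; auto. }
    split; intros Hx x; apply K; auto.
Qed.

Lemma tr_t_params T (A : T -> Prop) bs t : tparams_in A t -> tparams_in A (tr_t bs t).
Proof. induction t; simpl; try tauto. destruct (inb n bs); simpl; auto. Qed.

Lemma tr_params T (A : T -> Prop) phi : forall bs, fparams_in A phi -> fparams_in A (tr bs phi).
Proof.
  induction phi; intros bs; simpl; intros; auto;
  repeat match goal with H : _ /\ _ |- _ => destruct H end;
  try split; auto using tr_t_params.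
Qed.

Lemma tparams_mono T (A B : T -> Prop) t : (forall p, A p -> B p) -> tparams_in A t -> tparams_in B t.
Proof. intro H; induction t; simpl; intros; auto;
  repeat match goal with H : _ /\ _ |- _ => destruct H end; try split; auto. Qed.

Lemma fparams_mono T (A B : T -> Prop) phi : (forall p, A p -> B p) -> fparams_in A phi -> fparams_in B phi.
Proof.
  intro H; induction phi; simpl; intros; auto;
  repeat match goal with H : _ /\ _ |- _ => destruct H end;
  try split; eauto using tparams_mono.
Qed.

Lemma tparams_tnmul T (A : T -> Prop) n t : tparams_in A t -> tparams_in A (tnmul n t).
Proof. intro H; induction n; simpl; auto. Qed.

Lemma tparams_tzmul T (A : T -> Prop) s t : tparams_in A t -> tparams_in A (tzmul s t).
Proof. intro H; destruct s; simpl; auto using tparams_tnmul. Qed.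

Lemma dcl_mono M (A B : car M -> Prop) x : (forall p, A p -> B p) -> dcl A x -> dcl B x.
Proof. intros H [phi [Hp Hphi]]. exists phi. split; auto. eapply fparams_mono; eauto. Qed.

Lemma dcl_comp M (A : car M -> Prop) g x : dcl A g ->
  (exists psi, fparams_in A psi /\
     forall y, sat M (fun p => p) (upd M (fun _ => y) 0 g) psi <-> y = x) -> dcl A x.
Proof.
  intros [phi [Hp Hphi]] [psi [Hq Hpsi]].
  exists (FEx 0 (FAnd (tr [] phi) psi)). split.
  - simpl. split; auto. apply tr_params; auto.
  - intro y. unfold sat1. simpl.
    assert (K : forall z, sat M (fun p => p) (upd M (fun _ => y) 0 z) (tr [] phi) <-> z = g).
    { intro z. rewrite (tr_ok M _ _ phi [] (fun _ => z)).
      - apply Hphi.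
      - intros n Hn; discriminate.
      - intros n _. reflexivity. }
    split.
    + intros [z [H1 H2]]. apply K in H1. subst z. apply Hpsi; auto.
    + intro E. exists g. split. apply K; auto. apply Hpsi; auto.
Qed.

Lemma T16 M (HM : presburger_model M) : forall a r, ple M (padd M (pzero M) (nat_el M 0)) r ->
  ple M (psub M a r) a /\ ple M a (padd M a r).
Proof.
  intros a r.
  pose proof (HM (FImp (fle (TAdd TZero (tnat 0)) (V 1)) (FAnd (fle (tsub (V 0) (V 1)) (V 0)) (fle (V 0) (TAdd (V 0) (V 1)))))) as H.
  specialize (H ltac:(zside; lia) (env [a;r])). mside H.
Qed.

Definition DC M (Q : car M -> Prop) := forall r r', Q r -> ple M r' r -> Q r'.
Definition Ach M (Q : car M -> Prop) := forall r, far0 M r -> exists r', far0 M r' /\ ple M r' r /\ Q r'.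

Lemma ach_and M (HM : presburger_model M) Q1 Q2 : Ach M Q1 -> Ach M Q2 -> DC M Q1 ->
  Ach M (fun r => Q1 r /\ Q2 r).
Proof.
  intros A1 A2 D1 r Hr. destruct (A1 r Hr) as [r1 [H1 [H2 H3]]].
  destruct (A2 r1 H1) as [r2 [H4 [H5 H6]]]. exists r2. split; auto. split.
  eapply Ttrans; eauto. split; auto. eapply D1; eauto.
Qed.

Lemma dc_and M Q1 Q2 : DC M Q1 -> DC M Q2 -> DC M (fun r => Q1 r /\ Q2 r).
Proof. intros D1 D2 r r' [? ?] ?; split; eauto. Qed.

Lemma ach_true M : Ach M (fun _ => True).
Proof. intros r Hr. exists r. split; auto. split; auto. right; reflexivity. Qed.

Lemma dc_true M : DC M (fun _ => True).
Proof. intros ? ? ? ?; auto. Qed.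

Lemma ach_gap M (HM : presburger_model M) m u v : (0 < m)%nat -> far M u v ->
  Ach M (fun r => ple M (padd M u (nmul m r)) v).
Proof. intros Hm Hf r Hr. apply refine; auto. Qed.

Lemma dc_gap M (HM : presburger_model M) m u v : DC M (fun r => ple M (padd M u (nmul m r)) v).
Proof. intros r r' H1 H2. eapply T9; eauto. Qed.

Lemma dcl_param M (A : car M -> Prop) g : dcl A g -> dcl A g. Proof. auto. Qed.

Theorem lemma3p3 (M M0 : PStruct) (f : car M0 -> car M)
  (HM : presburger_model M) (Hsat : saturated M)
  (Hel : elem_emb M0 M f) (Hsmall : smaller M (car M0))
  (C : car M -> car M -> Prop) (HC : cell11 (img f) C)
  (a b : car M) (Hab : C a b) (Hdim : dim2 (img f) a b) :
  exists B1 B2 : car M -> Prop,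
    box_factor B1 a /\ box_factor B2 b /\
    (forall x t, B1 x -> B2 t -> C x t).
Proof.
  destruct HC as (D & lo & hi & N & k & HD & Hlo & Hhi & HN & Hk & HCdef & Hunb).
  destruct HD as (loD & hiD & ND & cD & HloD & HhiD & HND & HcD & HDdef & HDinf).
  destruct Hdim as [Ha Hb].
  pose proof Hab as Hab'. apply HCdef in Hab' as (HDa & Hloa & Hhia & Hkb).
  pose proof HDa as HDa'. apply HDdef in HDa' as (HloDa & HhiDa & HcDa).
  set (A1 := fun x => img f x \/ x = b). set (A2 := fun x => img f x \/ x = a).
  assert (G1 : exists Q, DC M Q /\ Ach M Q /\ forall r x, Q r -> ple M (psub M a r) x -> lbok loD x).
  { destruct loD as [al|].
    - exists (fun r => ple M (padd M al (nmul 1 r)) a). split. apply dc_gap; auto. split.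
      + apply ach_gap; auto. apply NNPP; intro Hf.
        destruct (notfar M HM al a HloDa Hf) as [n En].
        apply Ha. apply (dcl_comp _ _ al).
        * apply (dcl_mono _ (img f)). intros p Hp; left; auto. apply HloD; auto.
        * exists (FEq (TVar _ 1) (TAdd (TVar _ 0) (tnat n))). split.
          -- simpl. split; auto. split; auto. apply tparams_tnmul; simpl; auto.
          -- intro y. unfold tnat. simpl. rewrite teval_tnmul. simpl. rewrite En. reflexivity.
      + intros r x Hr Hx. simpl. eapply T11; eauto.
    - exists (fun _ => True). split. apply dc_true. split. apply ach_true. intros; simpl; auto. }
  assert (G2 : exists Q, DC M Q /\ Ach M Q /\ forall r x, Q r -> ple M x (padd M a r) -> ubok hiD x).
  { destruct hiD as [be|].
    - exists (fun r => ple M (padd M a (nmul 1 r)) be). split. apply dc_gap; auto. split.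
      + apply ach_gap; auto. apply NNPP; intro Hf.
        destruct (notfar M HM a be HhiDa Hf) as [n En].
        apply Ha. apply (dcl_comp _ _ be).
        * apply (dcl_mono _ (img f)). intros p Hp; left; auto. apply HhiD; auto.
        * exists (FEq (TAdd (TVar _ 1) (tnat n)) (TVar _ 0)). split.
          -- simpl. split; auto. split; auto. apply tparams_tnmul; simpl; auto.
          -- intro y. unfold tnat. simpl. rewrite teval_tnmul. simpl. rewrite En. split.
             ++ intro E. apply (T15 M HM y a (nat_el M n)). exact E.
             ++ intros ->. reflexivity.
      + intros r x Hr Hx. simpl. eapply T12; eauto.
    - exists (fun _ => True). split. apply dc_true. split. apply ach_true. intros; simpl; auto. }
  assert (G3 : exists Q, DC M Q /\ Ach M Q /\ forall r x t, far0 M r -> Q r -> D x ->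
      ple M (psub M a r) x -> ple M x (padd M a r) -> ple M (psub M b r) t -> lbfok lo x t).
  { destruct lo as [F|].
    - destruct (Hlo F eq_refl) as (s & kk & c & g & Hkk & Hc & Hg & HF).
      exists (fun r => ple M (padd M (F a) (nmul (Z.abs_nat s + kk) r)) b). split. apply dc_gap; auto. split.
      + apply ach_gap; auto. lia. apply NNPP; intro Hf.
        destruct (notfar M HM (F a) b Hloa Hf) as [n En].
        apply Hb. apply (dcl_comp _ _ (F a)).
        * apply (dcl_comp _ _ g).
          -- apply (dcl_mono _ (img f)). intros p Hp; left; auto. auto.
          -- exists (FEq (tnmul kk (tsub (TVar _ 1) (TVar _ 0))) (tzmul s (tsub (TPar a) (tnat c)))). split.
             ++ simpl. split. apply tparams_tnmul; simpl; auto. apply tparams_tzmul; simpl; split.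
                right; reflexivity. apply tparams_tnmul; simpl; auto.
             ++ intro y. unfold tsub, tnat. simpl. rewrite teval_tnmul, teval_tzmul. simpl.
                rewrite teval_tnmul. simpl. destruct (HF a HDa) as [_ E]. split.
                ** intro E'. eapply (T14 M HM kk Hkk). rewrite E. exact E'.
                ** intros ->. exact E.
        * exists (FEq (TVar _ 1) (TAdd (TVar _ 0) (tnat n))). split.
          -- simpl. split; auto. split; auto. apply tparams_tnmul; simpl; auto.
          -- intro y. unfold tnat. simpl. rewrite teval_tnmul. simpl. rewrite En. reflexivity.
      + intros r x t Hr Q Dx H1 H2 H3. simpl.
        destruct (HF x Dx) as [_ Ex]. destruct (HF a HDa) as [_ Ea].
        eapply (T13 M HM s kk c Hkk); eauto.
    - exists (fun _ => True). split. apply dc_true. split. apply ach_true. intros; simpl; auto. }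
  assert (G4 : exists Q, DC M Q /\ Ach M Q /\ forall r x t, far0 M r -> Q r -> D x ->
      ple M (psub M a r) x -> ple M x (padd M a r) -> ple M t (padd M b r) -> ubfok hi x t).
  { destruct hi as [F|].
    - destruct (Hhi F eq_refl) as (s & kk & c & g & Hkk & Hc & Hg & HF).
      exists (fun r => ple M (padd M b (nmul (Z.abs_nat s + kk) r)) (F a)). split. apply dc_gap; auto. split.
      + apply ach_gap; auto. lia. apply NNPP; intro Hf.
        destruct (notfar M HM b (F a) Hhia Hf) as [n En].
        apply Hb. apply (dcl_comp _ _ (F a)).
        * apply (dcl_comp _ _ g).
          -- apply (dcl_mono _ (img f)). intros p Hp; left; auto. auto.
          -- exists (FEq (tnmul kk (tsub (TVar _ 1) (TVar _ 0))) (tzmul s (tsub (TPar a) (tnat c)))). split.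
             ++ simpl. split. apply tparams_tnmul; simpl; auto. apply tparams_tzmul; simpl; split.
                right; reflexivity. apply tparams_tnmul; simpl; auto.
             ++ intro y. unfold tsub, tnat. simpl. rewrite teval_tnmul, teval_tzmul. simpl.
                rewrite teval_tnmul. simpl. destruct (HF a HDa) as [_ E]. split.
                ** intro E'. eapply (T14 M HM kk Hkk). rewrite E. exact E'.
                ** intros ->. exact E.
        * exists (FEq (TAdd (TVar _ 1) (tnat n)) (TVar _ 0)). split.
          -- simpl. split; auto. split; auto. apply tparams_tnmul; simpl; auto.
          -- intro y. unfold tnat. simpl. rewrite teval_tnmul. simpl. rewrite En. split.
             ++ intro E. apply (T15 M HM y b (nat_el M n)). exact E.
             ++ intros ->. reflexivity.
      + intros r x t Hr Q Dx H1 H2 H3. simpl.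
        destruct (HF x Dx) as [_ Ex]. destruct (HF a HDa) as [_ Ea].
        eapply (T13' M HM s kk c Hkk); eauto.
    - exists (fun _ => True). split. apply dc_true. split. apply ach_true. intros; simpl; auto. }
  assert (G0 : exists r0, far0 M r0).
  { destruct (T6 M HM (pzero M) a) as [H|H].
    - exists a. apply NNPP; intro Hf. destruct (notfar M HM _ _ H Hf) as [n En].
      apply Ha. exists (FEq (TVar _ 0) (TAdd TZero (tnat n))). split.
      + simpl. split; auto. split; auto. apply tparams_tnmul; simpl; auto.
      + intro y. unfold sat1, tnat. simpl. rewrite teval_tnmul. simpl. rewrite En. reflexivity.
    - exists (popp M a). intro n. apply T10; auto. revert n. apply NNPP; intro Hf.
      destruct (notfar M HM _ _ H Hf) as [n En].
      apply Ha. exists (FEq (TAdd (TVar _ 0) (tnat n)) TZero). split.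
      + simpl. split; auto. split; auto. apply tparams_tnmul; simpl; auto.
      + intro y. unfold sat1, tnat. simpl. rewrite teval_tnmul. simpl. split.
        * intro E. eapply (T15 M HM y a (nat_el M n)). rewrite <- En. exact E.
        * intros ->. symmetry; exact En. }
  destruct G1 as (Q1 & D1 & A1' & U1). destruct G2 as (Q2 & D2 & A2' & U2).
  destruct G3 as (Q3 & D3 & A3' & U3). destruct G4 as (Q4 & D4 & A4' & U4).
  destruct G0 as [r0 Hr0].
  assert (AA : Ach M (fun r => Q1 r /\ (Q2 r /\ (Q3 r /\ Q4 r)))).
  { apply (ach_and M HM); [auto | | auto]. apply (ach_and M HM); [auto | | auto]. apply (ach_and M HM); auto. }
  destruct (AA r0 Hr0) as (r & Hr & _ & Q1r & Q2r & Q3r & Q4r).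
  destruct (T16 M HM a r (Hr 0)) as [Ha1 Ha2].
  destruct (T16 M HM b r (Hr 0)) as [Hb1 Hb2].
  exists (fun x => lbok (Some (psub M a r)) x /\ ubok (Some (padd M a r)) x /\ pcong M ND x (nat_el M cD)).
  exists (fun t => lbok (Some (psub M b r)) t /\ ubok (Some (padd M b r)) t /\ pcong M N t (nat_el M k)).
  split; [|split].
  - exists (Some (psub M a r)), (Some (padd M a r)), ND, cD.
    split; auto. split; auto. split. intro; reflexivity. split. simpl; auto.
    split; intros al E; injection E; intros <-.
    apply left_inf; auto. apply right_inf; auto.
  - exists (Some (psub M b r)), (Some (padd M b r)), N, k.
    split; auto. split; auto. split. intro; reflexivity. split. simpl; auto.
    split; intros al E; injection E; intros <-.
    apply left_inf; auto. apply right_inf; auto.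
  - intros x t (Hx1 & Hx2 & Hx3) (Ht1 & Ht2 & Ht3). simpl in Hx1, Hx2, Ht1, Ht2.
    assert (Dx : D x). { apply HDdef. split. eapply U1; eauto. split; auto. eapply U2; eauto. }
    apply HCdef. split; auto. split. eapply U3; eauto. split; auto. eapply U4; eauto.
Qed.
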